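(* Let $h:\mathbb{R}\to\mathbb{R}$ be a smooth function with $h(T)=\pi/2$ for $T\le 0$, $0<h(T)<\pi/2$ for $0<T<1$, and $h(T)=0$ for $T\ge 1$. For $0\le T<1$ define $B(T)=\exp\left(\int_0^T \cot\bigl(h(z)\bigr)\,dz\right)$. Then $B(T)\to\infty$ as $T\to 1_-$, and for every integer $n\ge 0$ the $n$-th derivative of $1/B$ satisfies $\frac{d^n}{dT^n}\bigl(1/B(T)\bigr)\to 0$ as $T\to 1_-$.
   Context: Here $\cot$ denotes the cotangent; note that $\cot h(T)>0$ for $0<T<1$. *)

(* Defs.v *)
From Stdlib Require Import Reals.
From Coquelicot Require Import Coquelicot.
Open Scope R_scope.

Definition cot (x : R) : R := cos x / sin x.

Definition smooth (h : R -> R) : Prop := forall (n : nat) (x : R), ex_derive_n h n x.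

Definition B (h : R -> R) (T : R) : R := exp (RInt (fun z => cot (h z)) 0 T).

(* Main.v *)
Require Import Defs.
From Stdlib Require Import Reals Lra Lia FunctionalExtensionality.
From Coquelicot Require Import Coquelicot.
Open Scope R_scope.

Fixpoint Cn (n : nat) (f : R -> R) : Prop :=
  match n with O => True | S m => (forall x, ex_derive f x) /\ Cn m (Derive f) end.
Definition Cinf f := forall n, Cn n f.

Lemma Cn_weak n : forall f, Cn (S n) f -> Cn n f.
Proof.
  induction n as [|n IH]; intros f H; simpl in *; [trivial|].
  destruct H as [H1 H2]; split; [exact H1| apply IH; exact H2].
Qed.

Lemma Cn_ex n f x : Cn (S n) f -> ex_derive f x.
Proof. intros [H _]; apply H. Qed.

Lemma Cn_plus n : forall f g, Cn n f -> Cn n g -> Cn n (fun x => f x + g x).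
Proof.
  induction n as [|n IH]; intros f g Hf Hg; simpl; [trivial|].
  destruct Hf as [Hf1 Hf2]; destruct Hg as [Hg1 Hg2]; split.
  - intros x; apply (ex_derive_plus f g); auto.
  - replace (Derive (fun x => f x + g x)) with (fun x => Derive f x + Derive g x).
    + apply IH; auto.
    + apply functional_extensionality; intros x; rewrite Derive_plus; auto.
Qed.

Lemma Cn_mult n : forall f g, Cn n f -> Cn n g -> Cn n (fun x => f x * g x).
Proof.
  induction n as [|n IH]; intros f g Hf Hg; simpl; [trivial|].
  pose proof (Cn_weak _ _ Hf) as Hf'. pose proof (Cn_weak _ _ Hg) as Hg'.
  destruct Hf as [Hf1 Hf2]; destruct Hg as [Hg1 Hg2]; split.
  - intros x; apply (ex_derive_mult f g); auto.
  - replace (Derive (fun x => f x * g x)) with (fun x => Derive f x * g x + f x * Derive g x).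
    + apply Cn_plus; apply IH; auto.
    + apply functional_extensionality; intros x; rewrite Derive_mult; auto.
Qed.

Lemma Cn_const n c : Cn n (fun _ => c).
Proof.
  revert c; induction n as [|n IH]; intros c; simpl; [trivial|]. split.
  - intros; apply ex_derive_const.
  - replace (Derive (fun _ : R => c)) with (fun _ : R => 0). apply IH.
    apply functional_extensionality; intros x; rewrite Derive_const; auto.
Qed.

Lemma is_derive_sin_comp f x l : is_derive f x l -> is_derive (fun y => sin (f y)) x (cos (f x) * l).
Proof.
  intros H. apply is_derive_Reals. apply is_derive_Reals in H.
  pose proof (derivable_pt_lim_comp f sin x l (cos (f x)) H (derivable_pt_lim_sin _)) as K.
  unfold comp in K. exact K.
Qed.
Lemma is_derive_cos_comp f x l : is_derive f x l -> is_derive (fun y => cos (f y)) x (-1 * sin (f x) * l).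
Proof.
  intros H. apply is_derive_Reals. apply is_derive_Reals in H.
  replace (-1 * sin (f x) * l) with (- sin (f x) * l) by ring.
  pose proof (derivable_pt_lim_comp f cos x l (- sin (f x)) H (derivable_pt_lim_cos _)) as K.
  unfold comp in K. exact K.
Qed.

Lemma Cn_sincos n : forall f, Cn n f -> Cn n (fun x => sin (f x)) /\ Cn n (fun x => cos (f x)).
Proof.
  induction n as [|n IH]; intros f Hf; simpl; [tauto|].
  pose proof (Cn_weak _ _ Hf) as Hf'. destruct Hf as [Hf1 Hf2].
  destruct (IH f Hf') as [IHs IHc].
  split; split.
  - intros x. destruct (Hf1 x) as [l Hl]. eexists. apply is_derive_sin_comp; exact Hl.
  - replace (Derive (fun x => sin (f x))) with (fun x => cos (f x) * Derive f x).
    + apply Cn_mult; auto.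
    + apply functional_extensionality; intros x. symmetry; apply is_derive_unique.
      apply is_derive_sin_comp, Derive_correct; auto.
  - intros x. destruct (Hf1 x) as [l Hl]. eexists. apply is_derive_cos_comp; exact Hl.
  - replace (Derive (fun x => cos (f x))) with (fun x => (-1 * sin (f x)) * Derive f x).
    + apply Cn_mult; auto. apply Cn_mult; auto. apply Cn_const.
    + apply functional_extensionality; intros x. symmetry; apply is_derive_unique.
      apply is_derive_cos_comp, Derive_correct; auto.
Qed.

Lemma Cinf_plus f g : Cinf f -> Cinf g -> Cinf (fun x => f x + g x).
Proof. intros Hf Hg n; apply Cn_plus; auto. Qed.
Lemma Cinf_mult f g : Cinf f -> Cinf g -> Cinf (fun x => f x * g x).
Proof. intros Hf Hg n; apply Cn_mult; auto. Qed.
Lemma Cinf_const c : Cinf (fun _ => c).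
Proof. intros n; apply Cn_const. Qed.
Lemma Cinf_sin f : Cinf f -> Cinf (fun x => sin (f x)).
Proof. intros Hf n; apply Cn_sincos; auto. Qed.
Lemma Cinf_cos f : Cinf f -> Cinf (fun x => cos (f x)).
Proof. intros Hf n; apply Cn_sincos; auto. Qed.
Lemma Cinf_D f : Cinf f -> Cinf (Derive f).
Proof. intros Hf n; exact (proj2 (Hf (S n))). Qed.
Lemma Cinf_ex f x : Cinf f -> ex_derive f x.
Proof. intros Hf; exact (proj1 (Hf 1%nat) x). Qed.

Lemma smooth_Cinf h : smooth h -> Cinf h.
Proof.
  intros Hh n. assert (forall k, Cn n (Derive_n h k)); [|exact (H 0%nat)].
  induction n as [|n IH]; intros k; simpl; [trivial|]. split.
  - intros x. exact (Hh (S k) x).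
  - exact (IH (S k)).
Qed.

Lemma isd_plus f g x a b : is_derive f x a -> is_derive g x b -> is_derive (fun y => f y + g y) x (a + b).
Proof. intros H1 H2. apply (is_derive_plus f g x a b H1 H2). Qed.
Lemma isd_mult f g x a b : is_derive f x a -> is_derive g x b -> is_derive (fun y => f y * g y) x (a * g x + f x * b).
Proof. intros H1 H2. apply (is_derive_mult f g x a b H1 H2). intros; apply Rmult_comm. Qed.

Inductive good (s : R -> R) : nat -> (R -> R) -> Prop :=
| good_sm : forall m a, Cinf a -> good s m a
| good_div : forall m f, good s m f -> good s (S m) (fun t => f t / s t)
| good_plus : forall m f1 f2, good s m f1 -> good s m f2 -> good s m (fun t => f1 t + f2 t)
| good_lift : forall m f, good s m f -> good s (S m) f.

Lemma good_mult s m f a : Cinf a -> good s m f -> good s m (fun t => a t * f t).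
Proof.
  intros Ha H; induction H.
  - apply good_sm, Cinf_mult; auto.
  - replace (fun t => a t * (f t / s t)) with (fun t => (a t * f t) / s t).
    + apply good_div; auto.
    + apply functional_extensionality; intros t; unfold Rdiv; ring.
  - replace (fun t => a t * (f1 t + f2 t)) with (fun t => a t * f1 t + a t * f2 t).
    + apply good_plus; auto.
    + apply functional_extensionality; intros t; ring.
  - apply good_lift; auto.
Qed.

Lemma good_deriv s m f : Cinf s -> good s m f ->
  exists f', good s (S m) f' /\ forall t, s t <> 0 -> is_derive f t (f' t).
Proof.
  intros Hs H; induction H.
  - exists (Derive a); split. apply good_sm, Cinf_D; auto.
    intros t _; apply Derive_correct, Cinf_ex; auto.
  - destruct IHgood as [f' [Hg Hd]].
    exists (fun t => (f' t + (-1 * Derive s t) * (f t / s t)) / s t); split.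
    + apply good_div, good_plus; auto. apply good_mult.
      apply Cinf_mult. apply Cinf_const. apply Cinf_D; auto.
      apply good_div; auto.
    + intros t Ht. pose proof (is_derive_div f s t (f' t) (Derive s t) (Hd t Ht)
        (Derive_correct _ _ (Cinf_ex s t Hs)) Ht) as K.
      replace ((f' t + -1 * Derive s t * (f t / s t)) / s t) with
        ((f' t * s t - f t * Derive s t) / s t ^ 2); auto. field; auto.
  - destruct IHgood1 as [g1 [Hg1 Hd1]]; destruct IHgood2 as [g2 [Hg2 Hd2]].
    exists (fun t => g1 t + g2 t); split. apply good_plus; auto.
    intros t Ht; apply isd_plus; auto.
  - destruct IHgood as [f' [Hg Hd]]. exists f'; split; auto. apply good_lift; auto.
Qed.

Lemma le_div_le1 C p : 0 < p <= 1 -> 0 <= C -> C <= C / p.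
Proof.
  intros [H1 H2] HC. unfold Rdiv. rewrite <- (Rmult_1_r C) at 1.
  apply Rmult_le_compat_l; auto. rewrite <- Rinv_1. apply Rinv_le_contravar; lra.
Qed.

Lemma pow_pos_le1 p m : 0 < p <= 1 -> 0 < p ^ m <= 1.
Proof.
  intros [H1 H2]; split. apply pow_lt; auto.
  rewrite <- (pow1 m). apply pow_incr; lra.
Qed.

Lemma bounded_cont a : Cinf a -> exists C, 0 <= C /\ forall t, 1/2 <= t <= 1 -> Rabs (a t) <= C.
Proof.
  intros Ha.
  destruct (continuity_ab_maj (fun x => Rabs (a x)) (1/2) 1) as [M [HM _]]. lra.
  - intros c _. apply (continuity_pt_comp a Rabs c).
    apply continuity_pt_filterlim. exact (ex_derive_continuous a c (Cinf_ex a c Ha)).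
    apply Rcontinuity_abs.
  - exists (Rabs (a M)); split; auto. apply Rabs_pos.
Qed.

Lemma good_bound s m f : (forall t, 1/2 <= t < 1 -> 0 < s t <= 1) -> good s m f ->
  exists C, 0 <= C /\ forall t, 1/2 <= t < 1 -> Rabs (f t) <= C / s t ^ m.
Proof.
  intros Hs H; induction H.
  - destruct (bounded_cont a H) as [C [HC HB]]. exists C; split; auto.
    intros t Ht. eapply Rle_trans. apply HB; lra. apply le_div_le1; auto.
    apply pow_pos_le1; auto.
  - destruct IHgood as [C [HC HB]]. exists C; split; auto. intros t Ht.
    destruct (Hs t Ht) as [H1 H2].
    rewrite Rabs_div; [|lra]. rewrite (Rabs_pos_eq (s t)); [|lra].
    simpl. replace (C / (s t * s t ^ m)) with ((C / s t ^ m) / s t).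
    apply Rmult_le_compat_r. left; apply Rinv_0_lt_compat; auto. apply HB; auto.
    field. split; [|lra]. apply pow_nonzero; lra.
  - destruct IHgood1 as [C1 [HC1 HB1]]; destruct IHgood2 as [C2 [HC2 HB2]].
    exists (C1 + C2); split. lra. intros t Ht.
    eapply Rle_trans. apply Rabs_triang.
    replace ((C1 + C2) / s t ^ m) with (C1 / s t ^ m + C2 / s t ^ m) by (unfold Rdiv; ring).
    apply Rplus_le_compat; auto.
  - destruct IHgood as [C [HC HB]]. exists C; split; auto. intros t Ht.
    destruct (Hs t Ht) as [H1 H2]. eapply Rle_trans. apply HB; auto.
    simpl. replace (C / (s t * s t ^ m)) with ((C / s t ^ m) / s t).
    apply le_div_le1; auto. unfold Rdiv. apply Rmult_le_pos; auto.
    left; apply Rinv_0_lt_compat, pow_lt; auto.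
    field. split; [|lra]. apply pow_nonzero; lra.
Qed.

Definition Hyp (h : R -> R) : Prop := smooth h /\ (forall T, T <= 0 -> h T = PI / 2) /\
  (forall T, 0 < T < 1 -> 0 < h T < PI / 2) /\ (forall T, 1 <= T -> h T = 0).

Definition ss (h : R -> R) := fun t => sin (h t).
Definition cc (h : R -> R) := fun t => cos (h t).
Definition gg (h : R -> R) := fun t => cot (h t).
Definition FF (h : R -> R) := fun t => RInt (gg h) 0 t.
Definition uu (h : R -> R) := fun t => / B h t.

Lemma loc_lt1 t : t < 1 -> locally t (fun x => x < 1).
Proof. intros H; apply (open_lt 1 t H). Qed.

Lemma sc_bounds h : Hyp h -> forall t, t < 1 -> 0 < ss h t <= 1 /\ 0 <= cc h t.
Proof.
  intros [Hs [Hl [Hm Hr]]] t Ht. unfold ss, cc. pose proof PI_RGT_0.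
  destruct (Rle_lt_dec t 0) as [H0|H0].
  - rewrite Hl; auto. rewrite sin_PI2, cos_PI2; lra.
  - destruct (Hm t (conj H0 Ht)) as [H1 H2]. split; [split|].
    apply sin_gt_0; lra. apply (proj2 (SIN_bound _)). apply cos_ge_0; lra.
Qed.

Lemma Cinf_h h : Hyp h -> Cinf h.
Proof. intros [Hs _]; apply smooth_Cinf; auto. Qed.
Lemma Cinf_s h : Hyp h -> Cinf (ss h).
Proof. intros H; apply Cinf_sin, Cinf_h; auto. Qed.
Lemma Cinf_c h : Hyp h -> Cinf (cc h).
Proof. intros H; apply Cinf_cos, Cinf_h; auto. Qed.

Lemma g_derive h t : Hyp h -> t < 1 -> ex_derive (gg h) t.
Proof.
  intros H Ht. destruct (sc_bounds h H t Ht) as [[H1 _] _].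
  eexists. apply (is_derive_div (cc h) (ss h)).
  apply Derive_correct, Cinf_ex, Cinf_c; auto.
  apply Derive_correct, Cinf_ex, Cinf_s; auto. lra.
Qed.

Lemma g_cont h t : Hyp h -> t < 1 -> continuous (gg h) t.
Proof. intros H Ht. exact (ex_derive_continuous (gg h) t (g_derive h t H Ht)). Qed.

Lemma g_exRInt h t : Hyp h -> t < 1 -> ex_RInt (gg h) 0 t.
Proof.
  intros H Ht. apply (ex_RInt_continuous (V:=R_CompleteNormedModule)). intros z Hz. apply g_cont; auto.
  destruct Hz as [_ Hz]. eapply Rle_lt_trans; [exact Hz|]. apply Rmax_lub_lt; lra.
Qed.

Lemma F_derive h t : Hyp h -> t < 1 -> is_derive (FF h) t (gg h t).
Proof.
  intros H Ht. apply is_derive_RInt with (a := 0).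
  - eapply filter_imp; [|apply loc_lt1; exact Ht]. intros x Hx.
    apply RInt_correct, g_exRInt; auto.
  - apply g_cont; auto.
Qed.

Lemma u_eq h : uu h = fun t => / exp (FF h t).
Proof. reflexivity. Qed.

Lemma u_derive h t : Hyp h -> t < 1 -> is_derive (uu h) t (- gg h t * uu h t).
Proof.
  intros H Ht. rewrite u_eq.
  assert (K : is_derive (fun t => exp (FF h t)) t (exp (FF h t) * gg h t)).
  { apply is_derive_Reals. pose proof (F_derive h t H Ht) as K. apply is_derive_Reals in K.
    pose proof (derivable_pt_lim_comp (FF h) exp t _ _ K (derivable_pt_lim_exp _)) as K2.
    unfold comp in K2. exact K2. }
  pose proof (is_derive_inv _ _ _ K) as K2.
  pose proof (exp_pos (FF h t)).
  replace (- gg h t * / exp (FF h t)) with (- (exp (FF h t) * gg h t) / exp (FF h t) ^ 2).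
  apply K2; lra. field; lra.
Qed.

Lemma u_pos h t : 0 < uu h t.
Proof. rewrite u_eq. apply Rinv_0_lt_compat, exp_pos. Qed.

Lemma Dn_formula h : Hyp h -> forall n, exists P, good (ss h) n P /\
  forall t, t < 1 -> Derive_n (uu h) n t = P t * uu h t.
Proof.
  intros H n. induction n as [|n IH].
  - exists (fun _ => 1). split. apply good_sm, Cinf_const. intros t _; simpl; ring.
  - destruct IH as [P [HP HD]].
    destruct (good_deriv _ _ _ (Cinf_s h H) HP) as [P' [HP' HD']].
    exists (fun t => P' t + ((-1 * cc h t) * P t) / ss h t). split.
    + apply good_plus; auto. apply good_div, good_mult; auto.
      apply Cinf_mult. apply Cinf_const. apply Cinf_c; auto.
    + intros t Ht. simpl.
      rewrite (Derive_ext_loc _ (fun x => P x * uu h x)).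
      * apply is_derive_unique.
        destruct (sc_bounds h H t Ht) as [[H1 _] _].
        replace ((P' t + -1 * cc h t * P t / ss h t) * uu h t) with
          (P' t * uu h t + P t * (- gg h t * uu h t)).
        apply isd_mult. apply HD'; lra. apply u_derive; auto.
        unfold gg, cot, cc, ss. unfold Rdiv; ring.
      * eapply filter_imp; [|apply loc_lt1; exact Ht]. intros x Hx. apply HD; auto.
Qed.

Lemma aux_der a T n z : 0 < a + (T - z)/INR (S n) ->
  is_derive (fun z => exp (-z) * / (a + (T - z)/INR (S n))^(S n)) z
    (exp (-z) * / (a + (T - z)/INR (S n))^(S n) * (-1 + / (a + (T - z)/INR (S n)))).
Proof.
  intros Hq. assert (HN : 0 < INR (S n)) by (apply lt_0_INR; lia).
  set (M := INR (S n)) in *. set (q := a + (T - z) / M) in *.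
  assert (Hqn : q ^ n <> 0) by (apply pow_nonzero; lra).
  auto_derive; change (a + (T + - z) * / M) with q.
  - apply Rmult_integral_contrapositive; split; lra.
  - change (match n with 0%nat => 1 | S _ => INR n + 1 end) with M. simpl.
    field. repeat split; lra.
Qed.

Lemma exp_mono x y : x <= y -> exp x <= exp y.
Proof. intros [H|H]. left; apply exp_increasing; auto. subst; lra. Qed.

Lemma s_nonneg h x : Hyp h -> 0 <= ss h x.
Proof.
  intros H. destruct (Rlt_le_dec x 1) as [Hx|Hx].
  - destruct (sc_bounds h H x Hx) as [[H1 _] _]; lra.
  - destruct H as [_ [_ [_ Hr]]]. unfold ss. rewrite Hr; auto. rewrite sin_0; lra.
Qed.

Lemma s_at1 h : Hyp h -> ss h 1 = 0.
Proof. intros [_ [_ [_ Hr]]]. unfold ss. rewrite Hr. apply sin_0. lra. Qed.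

Lemma sd1 h : Hyp h -> Derive (ss h) 1 = 0.
Proof.
  intros H. pose proof (ex_derive_Reals_0 _ _ (Cinf_ex _ 1 (Cinf_s h H))) as pr.
  rewrite <- (Derive_Reals _ _ pr). apply (deriv_minimum _ 0 2 1 pr). lra. lra.
  intros x _ _. rewrite s_at1; auto. apply s_nonneg; auto.
Qed.

Lemma g_lb h z : Hyp h -> z < 1 -> / ss h z - ss h z <= gg h z /\ 0 <= gg h z.
Proof.
  intros H Hz. destruct (sc_bounds h H z Hz) as [[H1 H2] H3].
  pose proof (sin2_cos2 (h z)) as E. pose proof (COS_bound (h z)) as [_ Hc1].
  unfold Rsqr in E. fold (ss h z) in E. fold (cc h z) in E, Hc1.
  unfold gg, cot. fold (ss h z) (cc h z). split.
  - replace (/ ss h z - ss h z) with ((1 - ss h z * ss h z) / ss h z) by (field; lra).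
    unfold Rdiv. apply Rmult_le_compat_r. left; apply Rinv_0_lt_compat; lra.
    replace (1 - ss h z * ss h z) with (cc h z * cc h z) by lra.
    nra.
  - unfold Rdiv. apply Rmult_le_pos; auto. left; apply Rinv_0_lt_compat; lra.
Qed.

Lemma u_le1 h x : Hyp h -> 0 <= x < 1 -> uu h x <= 1.
Proof.
  intros H Hx. rewrite u_eq. simpl.
  assert (0 <= FF h x).
  { unfold FF. apply RInt_ge_0. lra. apply g_exRInt; auto. lra.
    intros y Hy. apply g_lb; auto. lra. }
  rewrite <- Rinv_1. apply Rinv_le_contravar. lra. rewrite <- exp_0. apply exp_mono; auto.
Qed.

Lemma main_est h n : Hyp h -> exists d, 0 < d /\ exists K,
  forall T, 1 - d < T < 1 -> uu h T <= K * ss h T ^ (S n).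
Proof.
  intros H.
  assert (HN : 0 < INR (S n)) by (apply lt_0_INR; lia).
  set (N := INR (S n)) in *.
  set (sd := Derive (ss h)).
  assert (Hc : continuous sd 1).
  { exact (ex_derive_continuous _ _ (Cinf_ex _ 1 (Cinf_D _ (Cinf_s h H)))). }
  assert (HiN : 0 < / N) by (apply Rinv_0_lt_compat; lra).
  destruct (proj1 (filterlim_locally sd (sd 1)) Hc (mkposreal _ HiN)) as [del Hdel].
  pose proof (cond_pos del) as Hdp.
  set (d := Rmin del (1/2) / 2).
  assert (Hd1 : 0 < d) by (unfold d; apply Rmin_case; lra).
  assert (Hd2 : 2 * d <= del) by (unfold d; pose proof (Rmin_l del (1/2)); lra).
  assert (Hd3 : 2 * d <= 1/2) by (unfold d; pose proof (Rmin_r del (1/2)); lra).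
  exists d; split; auto.
  exists (exp 1 * / (d / N) ^ (S n)).
  intros T HT.
  assert (Hsd : forall z, T - d <= z <= T -> Rabs (sd z) < / N).
  { intros z Hz. assert (K : ball 1 del z).
    { change (Rabs (z - 1) < del). rewrite Rabs_left1; lra. }
    pose proof (Hdel z K) as K2. change (Rabs (sd z - sd 1) < / N) in K2.
    unfold sd in K2. rewrite sd1 in K2; auto. rewrite Rminus_0_r in K2. exact K2. }
  destruct (sc_bounds h H T (proj2 HT)) as [[HsT HsT1] _].
  assert (Lip : forall z, T - d <= z <= T -> ss h z <= ss h T + (T - z) / N).
  { intros z Hz.
    destruct (MVT_gen (ss h) z T sd) as [xi [Hxi Exi]].
    - intros x _. apply Derive_correct, Cinf_ex, Cinf_s; auto.
    - intros x _. apply continuity_pt_filterlim.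
      exact (ex_derive_continuous _ _ (Cinf_ex _ x (Cinf_s h H))).
    - rewrite Rmin_left in Hxi by lra. rewrite Rmax_right in Hxi by lra.
      pose proof (Hsd xi ltac:(lra)) as K. apply Rabs_def2 in K.
      assert (sd xi * (T - z) >= - / N * (T - z)) by nra.
      unfold Rdiv. lra. }
  set (q := fun z => ss h T + (T - z) / N).
  set (E := fun z => exp (-z) * / q z ^ (S n)).
  set (psi := fun z => uu h z * E z).
  set (dpsi := fun z => (- gg h z * uu h z) * E z + uu h z * (E z * (-1 + / q z))).
  assert (Hq : forall z, z <= T -> 0 < q z).
  { intros z Hz. unfold q. assert (0 <= (T - z) / N). unfold Rdiv; apply Rmult_le_pos; lra. lra. }
  assert (Hder : forall z, z <= T -> is_derive psi z (dpsi z)).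
  { intros z Hz. unfold psi, dpsi. apply isd_mult. apply u_derive; auto; try lra.
    unfold E, q. apply aux_der. apply Hq; auto. }
  destruct (MVT_gen psi (T - d) T dpsi) as [xi [Hxi Exi]].
  - intros x Hx. apply Hder. rewrite Rmax_right in Hx; lra.
  - intros x Hx. rewrite Rmax_right in Hx by lra. apply continuity_pt_filterlim.
    exact (ex_derive_continuous psi x (ex_intro _ _ (Hder x ltac:(lra)))).
  - rewrite Rmin_left in Hxi by lra. rewrite Rmax_right in Hxi by lra.
    assert (Hneg : dpsi xi <= 0).
    { unfold dpsi.
      replace (- gg h xi * uu h xi * E xi + uu h xi * (E xi * (-1 + / q xi)))
        with ((uu h xi * E xi) * (- gg h xi - 1 + / q xi)) by ring.
      assert (0 < uu h xi * E xi).
      { apply Rmult_lt_0_compat. apply u_pos. unfold E. apply Rmult_lt_0_compat.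
        apply exp_pos. apply Rinv_0_lt_compat, pow_lt, Hq; lra. }
      assert (- gg h xi - 1 + / q xi <= 0).
      { destruct (g_lb h xi H ltac:(lra)) as [G1 _].
        destruct (sc_bounds h H xi ltac:(lra)) as [[S1 S2] _].
        assert (/ q xi <= / ss h xi).
        { apply Rinv_le_contravar; auto. }
        lra. }
      nra. }
    assert (Hle : psi T <= psi (T - d)) by nra.
    assert (HqT : q T = ss h T) by (unfold q; unfold Rdiv; ring).
    assert (Hup : psi (T - d) <= / (d / N) ^ (S n)).
    { unfold psi, E.
      assert (HdN : 0 < d / N) by (unfold Rdiv; apply Rmult_lt_0_compat; lra).
      assert (A1 : uu h (T - d) <= 1) by (apply u_le1; auto; lra).
      assert (A2 : exp (- (T - d)) <= 1) by (rewrite <- exp_0; apply exp_mono; lra).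
      assert (A3 : / q (T - d) ^ S n <= / (d / N) ^ S n).
      { apply Rinv_le_contravar. apply pow_lt; auto. apply pow_incr. split. lra.
        unfold q. replace (T - (T - d)) with d by ring. lra. }
      pose proof (u_pos h (T - d)).
      assert (0 < / q (T - d) ^ S n) by (apply Rinv_0_lt_compat, pow_lt, Hq; lra).
      pose proof (exp_pos (- (T - d))).
      assert (0 <= exp (- (T - d)) * / q (T - d) ^ S n) by nra.
      assert (exp (- (T - d)) * / q (T - d) ^ S n <= / (d / N) ^ S n) by nra.
      nra. }
    unfold psi, E in Hle, Hup. rewrite HqT in Hle.
    assert (Hs0 : 0 < ss h T ^ S n) by (apply pow_lt; auto).
    replace (uu h T) with ((uu h T * (exp (- T) * / ss h T ^ S n)) * (exp T * ss h T ^ S n)).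
    + assert (exp T <= exp 1) by (apply exp_mono; lra).
      pose proof (exp_pos T).
      assert (0 <= uu h T * (exp (- T) * / ss h T ^ S n)).
      { left. apply Rmult_lt_0_compat. apply u_pos. apply Rmult_lt_0_compat. apply exp_pos.
        apply Rinv_0_lt_compat; auto. }
      assert (0 <= / (d / N) ^ S n).
      { left; apply Rinv_0_lt_compat, pow_lt. unfold Rdiv; apply Rmult_lt_0_compat; lra. }
      assert (uu h T * (exp (- T) * / ss h T ^ S n) <= / (d / N) ^ S n) by lra.
      assert (exp T * ss h T ^ S n <= exp 1 * ss h T ^ S n) by (apply Rmult_le_compat_r; lra).
      apply Rle_trans with (/ (d / N) ^ S n * (exp T * ss h T ^ S n)).
      apply Rmult_le_compat_r; nra.
      replace (exp 1 * / (d / N) ^ S n * ss h T ^ S n) with (/ (d / N) ^ S n * (exp 1 * ss h T ^ S n)) by ring.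
      apply Rmult_le_compat_l; lra.
    + rewrite exp_Ropp. pose proof (exp_pos T). assert (ss h T ^ S n <> 0) by lra. field. split; lra.
Qed.

Lemma at_left_of (P : R -> Prop) : (exists del, 0 < del /\ forall T, 1 - del < T < 1 -> P T) -> at_left 1 P.
Proof.
  intros [del [Hd HP]]. exists (mkposreal del Hd). intros y Hb Hy.
  change (Rabs (y - 1) < del) in Hb. apply HP. rewrite Rabs_left in Hb; lra.
Qed.

Lemma s_small h : Hyp h -> forall eps, 0 < eps -> exists del, 0 < del /\
  forall T, 1 - del < T < 1 -> ss h T < eps.
Proof.
  intros H eps He.
  assert (Hc : continuous (ss h) 1) by exact (ex_derive_continuous _ _ (Cinf_ex _ 1 (Cinf_s h H))).
  destruct (proj1 (filterlim_locally (ss h) (ss h 1)) Hc (mkposreal _ He)) as [del Hdel].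
  exists del; split. apply cond_pos. intros T HT.
  assert (K : ball 1 del T). { change (Rabs (T - 1) < del). rewrite Rabs_left; lra. }
  pose proof (Hdel T K) as K2. change (Rabs (ss h T - ss h 1) < eps) in K2.
  rewrite s_at1 in K2; auto. rewrite Rminus_0_r in K2. apply Rabs_def2 in K2. lra.
Qed.

Theorem mainTheorem1 (h : R -> R)
  (h_smooth : smooth h)
  (h_left : forall T, T <= 0 -> h T = PI / 2)
  (h_mid : forall T, 0 < T < 1 -> 0 < h T < PI / 2)
  (h_right : forall T, 1 <= T -> h T = 0) :
  filterlim (B h) (at_left 1) (Rbar_locally p_infty) /\
  (forall n : nat,
     filterlim (fun T => Derive_n (fun t => / B h t) n T) (at_left 1) (locally 0)).
Proof.
  assert (H : Hyp h) by (split; [|split; [|split]]; auto).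
  split.
  - intros P [M HM]. apply at_left_of.
    destruct (main_est h 0 H) as [d [Hd [K HK]]].
    set (Kp := Rabs K + 1). assert (HKp : 0 < Kp) by (unfold Kp; pose proof (Rabs_pos K); lra).
    assert (He : 0 < / (Kp * (Rabs M + 1))).
    { apply Rinv_0_lt_compat, Rmult_lt_0_compat; auto. pose proof (Rabs_pos M); lra. }
    destruct (s_small h H _ He) as [del [Hdel Hs]].
    exists (Rmin d del); split. apply Rmin_case; lra.
    intros T HT. pose proof (Rmin_l d del); pose proof (Rmin_r d del).
    apply HM.
    pose proof (HK T ltac:(lra)) as U. pose proof (Hs T ltac:(lra)) as Ssm.
    destruct (sc_bounds h H T ltac:(lra)) as [[S1 _] _].
    pose proof (u_pos h T) as Up.
    rewrite pow_1 in U.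
    assert (K * ss h T <= Kp * ss h T).
    { apply Rmult_le_compat_r. lra. unfold Kp. pose proof (Rle_abs K); lra. }
    assert (Kp * ss h T < / (Rabs M + 1)).
    { replace (/ (Rabs M + 1)) with (Kp * / (Kp * (Rabs M + 1))).
      apply Rmult_lt_compat_l; auto. field. pose proof (Rabs_pos M); lra. }
    assert (HB : B h T = / uu h T).
    { unfold uu. rewrite Rinv_inv. reflexivity. }
    rewrite HB.
    assert (HH : / / (Rabs M + 1) < / uu h T).
    { apply Rinv_lt_contravar. apply Rmult_lt_0_compat; auto.
      apply Rinv_0_lt_compat; pose proof (Rabs_pos M); lra. lra. }
    rewrite Rinv_inv in HH. pose proof (Rle_abs M). lra.
  - intros n. change (fun t => / B h t) with (uu h).
    apply filterlim_locally. intros eps.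
    apply at_left_of.
    destruct (Dn_formula h H n) as [P [HP HD]].
    destruct (good_bound (ss h) n P) as [C [HC HCb]]; auto.
    { intros t Ht. apply sc_bounds; auto; lra. }
    destruct (main_est h n H) as [d [Hd [K HK]]].
    set (Kp := Rabs (C * K) + 1). assert (HKp : 0 < Kp) by (unfold Kp; pose proof (Rabs_pos (C * K)); lra).
    assert (He : 0 < eps / Kp) by (unfold Rdiv; apply Rmult_lt_0_compat; [apply cond_pos| apply Rinv_0_lt_compat; auto]).
    destruct (s_small h H _ He) as [del [Hdel Hs]].
    exists (Rmin (Rmin d del) (1/2)); split. repeat apply Rmin_case; lra.
    intros T HT. pose proof (Rmin_l (Rmin d del) (1/2)); pose proof (Rmin_r (Rmin d del) (1/2)).
    pose proof (Rmin_l d del); pose proof (Rmin_r d del).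
    change (Rabs (Derive_n (uu h) n T - 0) < eps). rewrite Rminus_0_r.
    rewrite HD by lra.
    pose proof (HK T ltac:(lra)) as U. pose proof (Hs T ltac:(lra)) as Ssm.
    destruct (sc_bounds h H T ltac:(lra)) as [[S1 _] _].
    pose proof (u_pos h T) as Up.
    pose proof (HCb T ltac:(lra)) as HPb.
    assert (Hsn : 0 < ss h T ^ n) by (apply pow_lt; auto).
    rewrite Rabs_mult, (Rabs_pos_eq (uu h T)) by lra.
    apply Rle_lt_trans with (C / ss h T ^ n * (K * ss h T ^ S n)).
    + apply Rle_trans with (C / ss h T ^ n * uu h T).
      apply Rmult_le_compat_r; lra.
      apply Rmult_le_compat_l; auto. unfold Rdiv; apply Rmult_le_pos; auto.
      left; apply Rinv_0_lt_compat; auto.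
    + replace (C / ss h T ^ n * (K * ss h T ^ S n)) with (C * K * ss h T) by (simpl; field; lra).
      apply Rle_lt_trans with (Kp * ss h T).
      apply Rmult_le_compat_r. lra. unfold Kp. pose proof (Rle_abs (C * K)); lra.
      replace (pos eps) with (Kp * (eps / Kp)) by (field; lra).
      apply Rmult_lt_compat_l; auto.
Qed.
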